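(* Assume the setting in the context, with a decomposition of $\mathcal X$ over $A$, $g\in\mathcal G_s$ and $\alpha\in(0,1)$. Let $\mathcal V$ be any subspace of $\mathcal U$ with $\mathcal U=\big(\bigoplus_{i\in\mathcal I}\mathcal E_i\big)\oplus\mathcal V$. If $\{(A,B|_{\mathcal E_i},g,\alpha)\}_{i\in\mathcal I}$ is a decomposition (Definition 1) of $(A,B,g,\alpha)$, then $A(\mathcal X)\cap B(\mathcal V)=\{0\}$.
   Context: Let $\mathcal F$ be a field and $\mathcal X,\mathcal U$ finite-dimensional vector spaces over $\mathcal F$. Let $A:\mathcal X\to\mathcal X$ and $B:\mathcal U\to\mathcal X$ be linear maps with $B$ injective, and consider $x_{t+1}=Ax_t+Bu_t$ and a cost $g:\mathcal X\to\mathbb R_{\ge0}$ with $g(x)=0\iff x=0$. Standing assumption: all minima appearing below are attained. Infinite-horizon problem $(A,B,g,\alpha)$: policies $\pi(x_0)=(\pi_t(x_0))_{t\in\mathbb Z_+}\in\mathcal U^{\mathbb Z_+}$, cost $J(x_0,\pi)=\sum_{t\ge0}\alpha^tg(x_t)$ with $x_{t+1}=Ax_t+B\pi_t(x_0)$; $J^*(x_0)=\min_\pi J(x_0,\pi)$, which satisfies the Bellman equation $J^*(x)=g(x)+\alpha\min_{u}J^*(Ax+Bu)$; minimizing policies are optimal. A decomposition of $\mathcal X$ over $A$ is a direct sum $\mathcal X=\mathcal X_1\oplus\cdots\oplus\mathcal X_r$ with $r>1$ and $A\mathcal X_i\subseteq\mathcal X_i$, $i\in\mathcal I=\{1,\dots,r\}$;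 $\rho_i:\mathcal X\to\mathcal X_i$ is the projection along the other summands. $\mathcal G_s$ is the set of $h:\mathcal X\to\mathbb R_{\ge0}$ with $h(x)=\sum_i h(\rho_i(x))$ for all $x$. $\mathcal E_i=\{u\in\mathcal U:Bu\in\mathcal X_i\}$ (the sum of the $\mathcal E_i$ is direct since $B$ is injective). Subproblem $(A,B|_{\mathcal E_i},g,\alpha)$: same problem for $x_{i,t+1}=Ax_{i,t}+B\bar u_{i,t}$ with states in $\mathcal X_i$ and inputs in $\mathcal E_i$; optimal cost $\bar J_i^*$, optimal policies $\bar\pi_i^*$. Definition 1: the family is a decomposition of $(A,B,g,\alpha)$ if for every $x$: $J^*(x)=\sum_i\bar J_i^*(\rho_i(x))$, and for every choice of optimal policies $\bar\pi_i^*(\rho_i(x))$ there is an optimal policy $\pi^*(x)$ with $\pi^*(x)=\sum_i\bar\pi_i^*(\rho_i(x))$. *)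

(* Defs.v *)
From HB Require Import structures.
From mathcomp Require Import all_boot all_order all_algebra.
From Stdlib Require Import Reals.
Set Implicit Arguments. Unset Strict Implicit. Unset Printing Implicit Defensive.
Import GRing.Theory.

(* Extended nonnegative cost values: Some c = finite cost c, None = +infinity. *)
Definition ecost := option R.

Definition ele (a b : ecost) : Prop :=
  match a, b with
  | Some x, Some y => Rle x y
  | _, None => True
  | None, Some _ => False
  end.

Definition eadd (a b : ecost) : ecost :=
  match a, b with
  | Some x, Some y => Some (Rplus x y)
  | _, _ => None
  end.

Definition series_value (f : nat -> R) (c : ecost) : Prop :=
  match c with
  | Some l => infinite_sum f l
  | None => ~ (exists l, infinite_sum f l)
  end.

Section Dyn.
Variables (F : fieldType) (X U : vectType F).

Fixpoint traj (A : 'End(X)) (B : 'Hom(U, X)) (x0 : X) (u : nat -> U) (t : nat)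
  : X :=
  match t with
  | O => x0
  | S t' => GRing.add (A (traj A B x0 u t')) (B (u t'))
  end.

Definition Jcost (A : 'End(X)) (B : 'Hom(U, X)) (g : X -> R) (alpha : R)
  (x0 : X) (u : nat -> U) (c : ecost) : Prop :=
  series_value (fun t => Rmult (pow alpha t) (g (traj A B x0 u t))) c.

Definition admissible (E : {vspace U}) (u : nat -> U) : Prop :=
  forall t, u t \in E.

Definition OptCost (A : 'End(X)) (B : 'Hom(U, X)) (E : {vspace U})
  (g : X -> R) (alpha : R) (x0 : X) (c : ecost) : Prop :=
  (exists u, admissible E u /\ Jcost A B g alpha x0 u c) /\
  (forall u' c', admissible E u' -> Jcost A B g alpha x0 u' c' -> ele c c').

Definition OptPolicy (A : 'End(X)) (B : 'Hom(U, X)) (E : {vspace U})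
  (g : X -> R) (alpha : R) (x0 : X) (u : nat -> U) : Prop :=
  admissible E u /\
  exists c, Jcost A B g alpha x0 u c /\ OptCost A B E g alpha x0 c.

Definition is_decomposition (r : nat) (A : 'End(X)) (B : 'Hom(U, X))
  (E : 'I_r -> {vspace U}) (rho : 'I_r -> X -> X) (g : X -> R) (alpha : R)
  : Prop :=
  forall x : X,
    (forall (c : ecost) (ci : 'I_r -> ecost),
        OptCost A B fullv g alpha x c ->
        (forall i, OptCost A B (E i) g alpha (rho i x) (ci i)) ->
        c = \big[eadd/Some R0]_(i < r) ci i) /\
    (forall ui : 'I_r -> nat -> U,
        (forall i, OptPolicy A B (E i) g alpha (rho i x) (ui i)) ->
        OptPolicy A B fullv g alpha x (fun t => \big[GRing.add/GRing.zero]_(i < r) ui i t)).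

End Dyn.

(* Main.v *)
Require Import Defs.
From HB Require Import structures.
From mathcomp Require Import all_boot all_order all_algebra.
From Stdlib Require Import Reals Lra ClassicalEpsilon.
Import GRing.Theory.

Section H.
Local Open Scope R_scope.

Lemma inf_sum_ge (f : nat -> R) l n :
  (forall t, 0 <= f t) -> infinite_sum f l -> sum_f_R0 f n <= l.
Proof.
move=> f0 Hl; apply: growing_ineq => //.
by move=> m /=; have := f0 (S m); lra.
Qed.

Lemma inf_sum_const (f : nat -> R) :
  (forall t, f (S t) = 0) -> infinite_sum f (f O).
Proof.
move=> fz e he; exists O => n _.
have -> : sum_f_R0 f n = f O.
  by elim: n => [|n IH] //=; rewrite IH fz; lra.
by rewrite /R_dist Rminus_diag Rabs_R0.
Qed.

Definition oval (a : ecost) : R := match a with Some x => x | None => 0 end.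

Lemma big_eadd_some (I : eqType) (s : seq I) (ci : I -> ecost) w :
  \big[eadd/Some R0]_(i <- s) ci i = Some w ->
  (forall i, i \in s -> ci i = Some (oval (ci i))) /\
  w = \big[Rplus/R0]_(i <- s) oval (ci i).
Proof.
elim: s w => [|x s IH] w.
  move=> H; rewrite big_nil in H; case: H => <-; split => //; by rewrite big_nil.
move=> H; rewrite big_cons in H.
move: H; case Hx: (ci x) => [a|] //; case Hs: (\big[eadd/Some R0]_(i <- s) ci i) => [b|] //=.
move=> [<-]; have [H1 H2] := IH _ Hs; split.
  move=> i; rewrite in_cons => /orP[/eqP->|/H1] //; by rewrite Hx.
by rewrite big_cons Hx /= H2.
Qed.

Lemma bigR_split (I : Type) (s : seq I) (a b : I -> R) :
  \big[Rplus/R0]_(i <- s) (a i + b i) =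
  \big[Rplus/R0]_(i <- s) a i + \big[Rplus/R0]_(i <- s) b i.
Proof. elim: s => [|x s IH]; rewrite ?big_nil ?big_cons; [lra|rewrite IH; lra]. Qed.

Lemma bigR_ge0_eq0 (I : eqType) (s : seq I) (a : I -> R) :
  (forall i, 0 <= a i) -> \big[Rplus/R0]_(i <- s) a i <= 0 ->
  forall i, i \in s -> a i = 0.
Proof.
move=> a0; elim: s => [|x s IH] //; rewrite big_cons => H.
have Hs : 0 <= \big[Rplus/R0]_(i <- s) a i.
  by elim: (s) => [|y t IHt]; rewrite ?big_nil ?big_cons; [lra| have := a0 y; lra].
move=> i; rewrite in_cons => /orP[/eqP->|]; first by have := a0 x; lra.
apply: IH; have := a0 x; lra.
Qed.

End H.

Theorem proposition8
  (F : fieldType) (X U : vectType F)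
  (A : 'End(X)) (B : 'Hom(U, X))
  (B_inj : injective (fun u : U => B u))
  (r : nat) (r_gt1 : (1 < r)%N)
  (Xs : 'I_r -> {vspace X})
  (Xs_direct : directv (\sum_(i < r) Xs i)%VS)
  (Xs_full : (\sum_(i < r) Xs i)%VS = fullv)
  (Xs_inv : forall i, (A @: Xs i <= Xs i)%VS)
  (rho : 'I_r -> X -> X)
  (rho_spec : forall x : X,
      (forall i, rho i x \in Xs i) /\ x = \big[GRing.add/GRing.zero]_(i < r) rho i x)
  (g : X -> R)
  (g_nonneg : forall x, Rle R0 (g x))
  (g_zero : forall x, g x = R0 <-> x = GRing.zero)
  (g_sep : forall x, g x = \big[Rplus/R0]_(i < r) g (rho i x))
  (alpha : R) (alpha_pos : Rlt R0 alpha) (alpha_lt1 : Rlt alpha R1)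
  (V : {vspace U})
  (V_compl : ((\sum_(i < r) (B @^-1: Xs i)%VS) :&: V)%VS = 0%VS)
  (V_full : ((\sum_(i < r) (B @^-1: Xs i)%VS) + V)%VS = fullv)
  (attained_full : forall x : X, exists c, OptCost A B fullv g alpha x c)
  (attained_sub : forall i (x : X), x \in Xs i ->
      exists c, OptCost A B (B @^-1: Xs i)%VS g alpha x c)
  (Hdec : is_decomposition A B (fun i => (B @^-1: Xs i)%VS) rho g alpha) :
  (limg A :&: (B @: V))%VS = 0%VS.
Proof.
apply/eqP; rewrite -subv0; apply/subvP => y; rewrite memv_cap.
case/andP => /memv_imgP[x0 _ ->] /memv_imgP[v Vv Hv].
suff v0 : v = GRing.zero by rewrite memv0 Hv v0 linear0.
pose uf := fun t : nat => if t is O then GRing.opp v else GRing.zero.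
have Jf : Jcost A B g alpha x0 uf (Some (g x0)).
  rewrite /Jcost /=.
  have -> : g x0 = Rmult (pow alpha 0) (g (traj A B x0 uf 0)) by rewrite /=; ring.
  apply: inf_sum_const => t.
  have -> : traj A B x0 uf (S t) = GRing.zero.
    elim: t => [|t IH]; first by rewrite /= linearN /= -Hv subrr.
    have -> : traj A B x0 uf t.+2 = GRing.add (A (traj A B x0 uf t.+1)) (B (uf t.+1)) by [].
    by rewrite IH /= !linear0 addr0.
  by rewrite (proj2 (g_zero _) erefl); ring.
have [c Hc] := attained_full x0.
have Hcle : ele c (Some (g x0)) by apply: Hc.2 Jf => t; exact: memvf.
pose ci := fun i => proj1_sig (constructive_indefinite_description _
              (attained_sub i (rho i x0) ((rho_spec x0).1 i))).
have Hci : forall i, OptCost A B (B @^-1: Xs i)%VS g alpha (rho i x0) (ci i).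
  move=> i; exact: proj2_sig (constructive_indefinite_description _ _).
have Hceq := (Hdec x0).1 c ci Hc Hci.
case: c Hc Hcle Hceq => [c0|] //= Hc Hcle Hceq.
have [Hsome Hsum] := @big_eadd_some _ _ _ _ (esym Hceq).
pose z := fun i => oval (ci i).
have key : forall i, exists u : nat -> U, u 0 \in (B @^-1: Xs i)%VS /\
    Rle (Rplus (g (rho i x0)) (Rmult alpha (g (GRing.add (A (rho i x0)) (B (u 0)))))) (z i).
  move=> i; have [[u [Hu Ju]] _] := Hci i.
  exists u; split; first exact: Hu.
  rewrite (Hsome i (mem_index_enum i)) /Jcost /= in Ju.
  have NN : forall t, Rle R0 (Rmult (pow alpha t) (g (traj A B (rho i x0) u t))).
    move=> t; apply: Rmult_le_pos; [apply: pow_le; lra | exact: g_nonneg].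
  have H := inf_sum_ge _ _ 1%nat NN Ju.
  rewrite /z; simpl in H; lra.
have Hz : forall i, Rle (g (rho i x0)) (z i).
  move=> i; have [u [_ H]] := key i.
  have := g_nonneg (GRing.add (A (rho i x0)) (B (u 0%nat))).
  have := Rmult_le_pos _ _ (Rlt_le _ _ alpha_pos) (g_nonneg (GRing.add (A (rho i x0)) (B (u 0%nat)))).
  lra.
have E : Rplus (\big[Rplus/R0]_(i < r) Rminus (z i) (g (rho i x0)))
               (\big[Rplus/R0]_(i < r) g (rho i x0)) = \big[Rplus/R0]_(i < r) z i.
  rewrite -bigR_split; apply: eq_bigr => i _; lra.
have Hle : Rle (\big[Rplus/R0]_(i < r) Rminus (z i) (g (rho i x0))) R0.
  move: E; rewrite -g_sep -Hsum; lra.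
have Hz0 := bigR_ge0_eq0 _ _ _ (fun i => Rge_le _ _ (Rge_minus _ _ (Rle_ge _ _ (Hz i)))) Hle.
have W : forall i, exists w, w \in (B @^-1: Xs i)%VS /\
    GRing.add (A (rho i x0)) (B w) = GRing.zero.
  move=> i; have [u [Hu H]] := key i; exists (u 0%nat); split => //.
  have Z := Hz0 i (mem_index_enum i).
  apply/g_zero.
  have G := g_nonneg (GRing.add (A (rho i x0)) (B (u 0%nat))).
  case: G => // G.
  have := Rmult_lt_0_compat _ _ alpha_pos G; lra.
pose w := fun i => sval (constructive_indefinite_description _ (W i)).
have Hw : forall i, w i \in (B @^-1: Xs i)%VS /\
    GRing.add (A (rho i x0)) (B (w i)) = GRing.zero.
  move=> i; exact: (proj2_sig (constructive_indefinite_description _ (W i))).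
have HB : B (GRing.add v (\sum_(i < r) w i)) = B GRing.zero.
  rewrite linear0 linearD linear_sum /= -Hv {1}(rho_spec x0).2 linear_sum -big_split.
  by apply: big1 => i _ /=; exact: (Hw i).2.
have Hv0 := B_inj _ _ HB.
have Hvin : v \in (\sum_(i < r) (B @^-1: Xs i)%VS :&: V)%VS.
  rewrite memv_cap Vv andbT.
  have -> : v = GRing.opp (\sum_(i < r) w i).
    by apply/eqP; rewrite -addr_eq0; apply/eqP.
  by rewrite rpredN; apply: memv_sumr => i _; exact: (Hw i).1.
by move: Hvin; rewrite V_compl memv0 => /eqP.
Qed.
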